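(* Let $r\in\mathbb{R}$ be a root of $a_nx^n+\dots+a_1x+a_0$ with $a_0,\dots,a_n\in\mathbb{Z}$, $a_n\neq0$. Let $\alpha=k_1/k_2<r<\beta=l_1/l_2$ be rationals ($k_1,l_1\in\mathbb{Z}$, $k_2,l_2\in\mathbb{Z}\setminus\{0\}$) such that the polynomial has no root in $[\alpha,\beta]$ other than $r$, and let $a=\max\{|a_0|,\dots,|a_n|,|k_1|,|k_2|,|l_1|,|l_2|\}$. Then the finite set $$A=\Big\{\sum_{i=0}^n b_ir^i: b_i\in\mathbb{Z}\cap[-a,a]\Big\}\cup\{\alpha,\ r-\alpha,\ \sqrt{r-\alpha},\ \beta,\ \beta-r,\ \sqrt{\beta-r}\}$$ has the property that every map $f:A\to\mathbb{R}$ satisfying (1)–(3) satisfies $f(r)=r$.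
   Context: For a finite set $A\subseteq\mathbb{R}$, conditions (1)–(3) on a map $f:A\to\mathbb{R}$ are: (1) if $1\in A$ then $f(1)=1$; (2) if $a,b\in A$ and $a+b\in A$ then $f(a+b)=f(a)+f(b)$; (3) if $a,b\in A$ and $a\cdot b\in A$ then $f(a\cdot b)=f(a)\cdot f(b)$. *)

(* Defs.v *)
From Stdlib Require Import Reals ZArith List.
Open Scope R_scope.

(* Conditions (1)-(3) for a map f : A -> R, A given as a predicate on R.
   f is represented by a total function R -> R; only its values on A matter. *)
Definition satisfies_conds (A : R -> Prop) (f : R -> R) : Prop :=
  (A 1 -> f 1 = 1) /\
  (forall x y, A x -> A y -> A (x + y) -> f (x + y) = f x + f y) /\
  (forall x y, A x -> A y -> A (x * y) -> f (x * y) = f x * f y).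

Definition zpoly_eval (n : nat) (c : nat -> Z) (x : R) : R :=
  sum_f_R0 (fun i => IZR (c i) * x ^ i) n.

Definition height_bound (n : nat) (c : nat -> Z) (k1 k2 l1 l2 : Z) : Z :=
  fold_right Z.max (Z.max (Z.max (Z.abs k1) (Z.abs k2)) (Z.max (Z.abs l1) (Z.abs l2)))
    (map (fun i => Z.abs (c i)) (seq 0 (S n))).

Definition setA (n : nat) (bnd : Z) (r alpha beta : R) (x : R) : Prop :=
  (exists b : nat -> Z,
      (forall i, (i <= n)%nat -> (- bnd <= b i <= bnd)%Z) /\
      x = sum_f_R0 (fun i => IZR (b i) * r ^ i) n)
  \/ x = alpha \/ x = r - alpha \/ x = sqrt (r - alpha)
  \/ x = beta \/ x = beta - r \/ x = sqrt (beta - r).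

(* Main.v *)
Require Import Defs.
From Stdlib Require Import Reals ZArith List Lra Lia.
Open Scope R_scope.

Lemma fold_max_ge (l : list Z) (z : Z) :
  (z <= fold_right Z.max z l)%Z /\ forall x, In x l -> (x <= fold_right Z.max z l)%Z.
Proof.
  induction l as [|a l IH]; simpl; split.
  - lia.
  - tauto.
  - destruct IH; lia.
  - intros x [->|Hx]; destruct IH as [_ H]; [lia|]. specialize (H x Hx); lia.
Qed.

Lemma sum_single n j z r :
  sum_f_R0 (fun i => IZR (if Nat.eqb i j then z else 0%Z) * r ^ i) n
  = if Nat.leb j n then IZR z * r ^ j else 0.
Proof.
  induction n as [|n IH].
  - destruct j; simpl; ring.
  - rewrite tech5, IH. cbv beta.
    destruct (Nat.eqb (S n) j) eqn:E;
      [apply Nat.eqb_eq in E | apply Nat.eqb_neq in E];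
      destruct (Nat.leb_spec j n);
      destruct (Nat.leb_spec j (S n)); try lia; subst; ring.
Qed.

Lemma sum_trunc n m c r : (m <= n)%nat ->
  sum_f_R0 (fun i => IZR (if Nat.leb i m then c i else 0%Z) * r ^ i) n
  = sum_f_R0 (fun i => IZR (c i) * r ^ i) m.
Proof.
  induction n as [|n IH]; intros Hm.
  - assert (m = 0%nat) by lia; subst; simpl; reflexivity.
  - destruct (Nat.eq_dec m (S n)) as [->|Hne].
    + apply sum_eq. intros i Hi. rewrite (proj2 (Nat.leb_le i (S n)) Hi). reflexivity.
    + rewrite tech5, IH by lia. cbv beta.
      destruct (Nat.leb_spec (S n) m); [lia|]. ring.
Qed.

Theorem mainTheorem8 (n : nat) (c : nat -> Z) (r : R) (k1 k2 l1 l2 : Z)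
  (hlead : c n <> 0%Z)
  (hroot : zpoly_eval n c r = 0)
  (hk2 : k2 <> 0%Z) (hl2 : l2 <> 0%Z)
  (hlt1 : IZR k1 / IZR k2 < r) (hlt2 : r < IZR l1 / IZR l2)
  (huniq : forall x, IZR k1 / IZR k2 <= x <= IZR l1 / IZR l2 ->
             zpoly_eval n c x = 0 -> x = r) :
  forall f : R -> R,
    satisfies_conds
      (setA n (height_bound n c k1 k2 l1 l2) r (IZR k1 / IZR k2) (IZR l1 / IZR l2)) f ->
    f r = r.
Proof.
  intros f [H1 [Hadd Hmul]].
  set (bnd := height_bound n c k1 k2 l1 l2) in *.
  set (al := IZR k1 / IZR k2) in *.
  set (be := IZR l1 / IZR l2) in *.
  set (A := setA n bnd r al be) in *.
  assert (Hbc : forall i, (i <= n)%nat -> (Z.abs (c i) <= bnd)%Z).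
  { intros i Hi. unfold bnd, height_bound. apply fold_max_ge.
    apply (in_map (fun i => Z.abs (c i))). apply in_seq. lia. }
  assert (Hbk : (Z.abs k1 <= bnd /\ Z.abs k2 <= bnd /\ Z.abs l1 <= bnd /\ Z.abs l2 <= bnd)%Z).
  { unfold bnd, height_bound.
    match goal with |- context [fold_right Z.max ?z ?l] =>
      destruct (fold_max_ge l z) as [Hz _] end. lia. }
  assert (Hb1 : (1 <= bnd)%Z) by (specialize (Hbc n (le_n n)); lia).
  assert (Amon : forall j z, (j <= n)%nat -> (Z.abs z <= bnd)%Z -> A (IZR z * r ^ j)).
  { intros j z Hj Hz. left. exists (fun i => if Nat.eqb i j then z else 0%Z). split.
    - intros i _. destruct (Nat.eqb i j); lia.
    - rewrite sum_single. rewrite (proj2 (Nat.leb_le j n) Hj). reflexivity. }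
  assert (Aint : forall z, (Z.abs z <= bnd)%Z -> A (IZR z)).
  { intros z Hz. replace (IZR z) with (IZR z * r ^ 0) by (simpl; ring).
    apply Amon; [lia|exact Hz]. }
  assert (Apow : forall j, (j <= n)%nat -> A (r ^ j)).
  { intros j Hj. replace (r ^ j) with (IZR 1 * r ^ j) by ring. apply Amon; [exact Hj|lia]. }
  assert (Apart : forall m, (m <= n)%nat -> A (sum_f_R0 (fun i => IZR (c i) * r ^ i) m)).
  { intros m Hm. left. exists (fun i => if Nat.leb i m then c i else 0%Z). split.
    - intros i Hi. destruct (Nat.leb i m); [specialize (Hbc i Hi)|]; lia.
    - rewrite sum_trunc by exact Hm. reflexivity. }
  assert (A0 : A 0) by (apply (Aint 0%Z); lia).
  assert (A1 : A 1) by (apply (Aint 1%Z); lia).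
  assert (f0 : f 0 = 0).
  { assert (H := Hadd 0 0 A0 A0). rewrite Rplus_0_r in H. specialize (H A0). lra. }
  assert (f1 : f 1 = 1) by (apply H1; exact A1).
  assert (fnat : forall k : nat, (Z.of_nat k <= bnd)%Z -> f (INR k) = INR k).
  { induction k as [|k IH]; intros Hk.
    - simpl. exact f0.
    - rewrite S_INR. rewrite Hadd.
      + rewrite IH by lia. rewrite f1. reflexivity.
      + rewrite INR_IZR_INZ. apply Aint. lia.
      + exact A1.
      + rewrite <- S_INR, INR_IZR_INZ. apply Aint. lia. }
  assert (fint : forall z, (Z.abs z <= bnd)%Z -> f (IZR z) = IZR z).
  { intros z Hz. destruct (Z_le_gt_dec 0 z) as [Hp|Hn].
    - replace z with (Z.of_nat (Z.to_nat z)) by lia. rewrite <- INR_IZR_INZ.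
      apply fnat. lia.
    - assert (Hm : f (IZR (- z)) = IZR (- z)).
      { replace (- z)%Z with (Z.of_nat (Z.to_nat (- z))) by lia. rewrite <- INR_IZR_INZ.
        apply fnat. lia. }
      assert (H := Hadd (IZR z) (IZR (- z)) (Aint z Hz) (Aint (- z)%Z ltac:(lia))).
      rewrite opp_IZR in *. replace (IZR z + - IZR z) with 0 in H by ring.
      specialize (H A0). rewrite f0, Hm in H. lra. }
  destruct n as [|n'].
  { exfalso. unfold zpoly_eval in hroot. simpl in hroot.
    apply hlead. apply eq_IZR. lra. }
  assert (Ar : A r) by (replace r with (r ^ 1) by (simpl; ring); apply Apow; lia).
  assert (fpow : forall j, (j <= S n')%nat -> f (r ^ j) = f r ^ j).
  { induction j as [|j IH]; intros Hj.
    - simpl. exact f1.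
    - simpl. rewrite Hmul; [| exact Ar | apply Apow; lia | apply (Apow (S j)); lia].
      rewrite IH by lia. reflexivity. }
  assert (fpart : forall m, (m <= S n')%nat ->
     f (sum_f_R0 (fun i => IZR (c i) * r ^ i) m) = sum_f_R0 (fun i => IZR (c i) * f r ^ i) m).
  { induction m as [|m IH]; intros Hm.
    - simpl. rewrite Hmul; [| apply Aint, Hbc; lia | apply (Apow 0%nat); lia |].
      + rewrite fint by (apply Hbc; lia). rewrite f1. reflexivity.
      + apply (Amon 0%nat); [lia | apply Hbc; lia].
    - rewrite !tech5. rewrite Hadd; [| apply Apart; lia | apply Amon; [lia| apply Hbc; lia]
        | apply (Apart (S m)); lia].
      rewrite IH by lia. rewrite Hmul; [| apply Aint, Hbc; lia | apply Apow; lia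
        | apply Amon; [lia| apply Hbc; lia]].
      rewrite fint by (apply Hbc; lia). rewrite fpow by lia. reflexivity. }
  assert (Hrootf : zpoly_eval (S n') c (f r) = 0).
  { unfold zpoly_eval. rewrite <- fpart by lia. fold (zpoly_eval (S n') c r).
    rewrite hroot. exact f0. }
  assert (k2nz : IZR k2 <> 0) by (apply not_0_IZR; exact hk2).
  assert (l2nz : IZR l2 <> 0) by (apply not_0_IZR; exact hl2).
  assert (Aal : A al) by (right; left; reflexivity).
  assert (Abe : A be) by (right; right; right; right; left; reflexivity).
  assert (fal : f al = al).
  { assert (H := Hmul al (IZR k2) Aal (Aint k2 ltac:(lia))).
    replace (al * IZR k2) with (IZR k1) in H by (unfold al; field; exact k2nz).
    specialize (H (Aint k1 ltac:(lia))). rewrite !fint in H by lia.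
    apply (Rmult_eq_reg_r (IZR k2)); [|exact k2nz]. rewrite <- H.
    unfold al. field. exact k2nz. }
  assert (fbe : f be = be).
  { assert (H := Hmul be (IZR l2) Abe (Aint l2 ltac:(lia))).
    replace (be * IZR l2) with (IZR l1) in H by (unfold be; field; exact l2nz).
    specialize (H (Aint l1 ltac:(lia))). rewrite !fint in H by lia.
    apply (Rmult_eq_reg_r (IZR l2)); [|exact l2nz]. rewrite <- H.
    unfold be. field. exact l2nz. }
  assert (Hlo : al <= f r).
  { assert (Ara : A (r - al)) by (right; right; left; reflexivity).
    assert (Asa : A (sqrt (r - al))) by (right; right; right; left; reflexivity).
    assert (Hs := Hmul _ _ Asa Asa).
    rewrite sqrt_sqrt in Hs by lra. specialize (Hs Ara).
    assert (H := Hadd al (r - al) Aal Ara).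
    replace (al + (r - al)) with r in H by ring. specialize (H Ar).
    rewrite H, fal, Hs. nra. }
  assert (Hhi : f r <= be).
  { assert (Ara : A (be - r)) by (right; right; right; right; right; left; reflexivity).
    assert (Asa : A (sqrt (be - r))) by (right; right; right; right; right; right; reflexivity).
    assert (Hs := Hmul _ _ Asa Asa).
    rewrite sqrt_sqrt in Hs by lra. specialize (Hs Ara).
    assert (H := Hadd r (be - r) Ar Ara).
    replace (r + (be - r)) with be in H by ring. specialize (H Abe).
    rewrite fbe, Hs in H. nra. }
  apply huniq; [lra | exact Hrootf].
Qed.
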